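(* (1) Let $K\ge 2$ and $M\ge K+1$. Let $F\in\mathcal F_K^{\mathrm{an}}$ be such that there are $\delta>0$ and a row $i$ with $\delta\le F_{ik}\le 1-\delta$ for all $k\in\{1,\dots,K\}$, and let $Q\in\mathcal Q_K\setminus\mathcal Q_K^{\mathrm{in}}$. Then there is $F^2\in\mathcal F_K^{\mathrm{an}}$ such that $FQ=F^2Q$ but $(F,Q)\not\sim(F^2,Q)$. (2) Let $F\in\mathcal F_K$ and $Q\in\mathcal Q_K^{\mathrm{in}}$ be such that there are $0<\delta<1/2$ and a row index $k_0$ with $Q_{k_0 i}\ge\delta$ for all $i\in\{1,\dots,N\}$. Then there are $F^2\in\mathcal F_K\setminus\mathcal F_K^{\mathrm{an}}$ and $Q^2\in\mathcal Q_K^{\mathrm{in}}$ such that $FQ=F^2Q^2$ but $(F,Q)\not\sim(F^2,Q^2)$. Moreover $F^2$ can be chosen so that $\{k:\ c\,e_k^{\top}\text{ is a row of }F^2\text{ for some }c>0\}=\{k:\ c\,e_k^{\top}\text{ is a row of }F\text{ for some }c>0\}\setminus\{k_0\}$.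
   Context: Fix positive integers $M$ and $N$. For a positive integer $K$, $\mathcal F_K$ is the set of real $M\times K$ matrices with all entries in $[0,1]$, and $\mathcal Q_K$ is the set of real $K\times N$ matrices with entries in $[0,1]$ each of whose columns sums to $1$. $e_k$ is the $k$-th standard basis vector of $\mathbb R^K$. $\mathcal F_K^{\mathrm{an}}$ is the set of $F\in\mathcal F_K$ such that for every $k\in\{1,\dots,K\}$ there is a row $s$ with $F_{sk}>0$ and $F_{s\ell}=0$ for all $\ell\ne k$. $\mathcal Q_K^{\mathrm{in}}$ is the set of $Q\in\mathcal Q_K$ whose rows are linearly independent. $(F^1,Q^1)\sim(F^2,Q^2)$ means $F^1,F^2$ have the same number $K$ of columns and there is a permutation $\pi$ of $\{1,\dots,K\}$ with $F^2_{sk}=F^1_{s\pi(k)}$ and $Q^2_{ki}=Q^1_{\pi(k)i}$ for all $s,k,i$. *)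

(* Defs.v *)
From HB Require Import structures.
From mathcomp Require Import all_boot all_order all_algebra all_fingroup.
From mathcomp Require Import reals.
Set Implicit Arguments. Unset Strict Implicit. Unset Printing Implicit Defensive.
Import Order.TTheory GRing.Theory Num.Theory.
Local Open Scope ring_scope.

Section Defs.
Variable R : realType.

Definition inFK (M K : nat) (F : 'M[R]_(M, K)) : Prop :=
  forall s k, 0 <= F s k <= 1.

Definition inQK (K N : nat) (Q : 'M[R]_(K, N)) : Prop :=
  (forall k i, 0 <= Q k i <= 1) /\ (forall i, \sum_(k < K) Q k i = 1).

Definition inFKan (M K : nat) (F : 'M[R]_(M, K)) : Prop :=
  inFK F /\
  forall k : 'I_K, exists s : 'I_M, 0 < F s k /\ forall l : 'I_K, l != k -> F s l = 0.

Definition inQKin (K N : nat) (Q : 'M[R]_(K, N)) : Prop :=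
  inQK Q /\ row_free Q.

(* (F1,Q1) ~ (F2,Q2) : same K (enforced by typing) and a common permutation *)
Definition equivFQ (M K N : nat) (F1 : 'M[R]_(M, K)) (Q1 : 'M[R]_(K, N))
    (F2 : 'M[R]_(M, K)) (Q2 : 'M[R]_(K, N)) : Prop :=
  exists pi : 'S_K,
    (forall s k, F2 s k = F1 s (pi k)) /\ (forall k i, Q2 k i = Q1 (pi k) i).

Definition anchored (M K : nat) (F : 'M[R]_(M, K)) (k : 'I_K) : Prop :=
  exists s : 'I_M, exists c : R, 0 < c /\ row s F = c *: delta_mx 0 k.

End Defs.

(* Main.v *)
Require Import Defs.
From HB Require Import structures.
From mathcomp Require Import all_boot all_order all_algebra all_fingroup.
From mathcomp Require Import reals.
From mathcomp Require Import ring lra.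
Import Order.TTheory GRing.Theory Num.Theory.
Local Open Scope ring_scope.

Lemma other_ord K (k0 : 'I_K) : (2 <= K)%N -> exists j : 'I_K, j != k0.
Proof.
move=> hK; have h0 : (0 < K)%N by apply: leq_trans hK.
have h1 : (1 < K)%N by [].
case: (eqVneq k0 (Ordinal h0)) => [->|ne].
  by exists (Ordinal h1); apply/eqP => /(congr1 val).
by exists (Ordinal h0); rewrite eq_sym.
Qed.

Lemma le1_of_sum (R : realType) K (X : 'I_K -> R) j :
  (forall k, 0 <= X k) -> \sum_k X k = 1 -> X j <= 1.
Proof.
move=> h0 h1; move: h1; rewrite (bigD1 j) //=.
have : 0 <= \sum_(i | i != j) X i by apply: sumr_ge0.
lra.
Qed.

Lemma le_sum_abs (R : realType) K (X : 'I_K -> R) j :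
  `|X j| <= \sum_k `|X k|.
Proof.
rewrite (bigD1 j) //=.
have : 0 <= \sum_(i | i != j) `|X i| by apply: sumr_ge0.
lra.
Qed.

Lemma nonfree_ker (R : realType) K N (Q : 'M[R]_(K, N)) :
  ~~ row_free Q -> exists v : 'rV_K, v != 0 /\ v *m Q = 0.
Proof.
rewrite -kermx_eq0 => hk.
case: (pickP (fun j => row j (kermx Q) != 0)) => [j Hj | H].
  exists (row j (kermx Q)); split => //.
  by rewrite -row_mul mulmx_ker row0.
suff hk0 : kermx Q = 0 by rewrite hk0 eqxx in hk.
apply/matrixP => a b; have := H a; move/negbFE/eqP/rowP/(_ b).
by rewrite !mxE.
Qed.

Lemma part1 (R : realType) (M N : nat) K : (2 <= K)%N ->
   forall (F : 'M[R]_(M, K)) (Q : 'M[R]_(K, N)),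
     inFKan F ->
     (exists delta : R, 0 < delta /\
        exists i : 'I_M, forall k : 'I_K, delta <= F i k <= 1 - delta) ->
     inQK Q -> ~ inQKin Q ->
     exists F2 : 'M[R]_(M, K),
       inFKan F2 /\ F *m Q = F2 *m Q /\ ~ equivFQ F Q F2 Q.
Proof.
move=> hK F Q [hF hanc] [d [hd [i hi]]] hQ hQin.
have : ~~ row_free Q by apply/negP => hf; apply: hQin; split.
case/nonfree_ker => v [v0 vQ].
set S := \sum_k `|v 0 k|.
have S0 : 0 <= S by apply: sumr_ge0 => k _.
set e := d / (1 + S).
have e0 : 0 < e by rewrite /e divr_gt0 // ltr_pwDl.
have eS : e * (1 + S) = d by rewrite /e divfK // gt_eqF // ltr_pwDl.
set F2 := F + e *: (delta_mx i 0 *m v).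
have F2E : forall s k, F2 s k = F s k + e * ((s == i)%:R * v 0 k).
  move=> s k; rewrite !mxE big_ord1 !mxE eqxx andbT //.
have ev : forall k, - d <= e * v 0 k <= d.
  move=> k; have := @le_sum_abs _ _ (fun k => v 0 k) k; rewrite -/S => h.
  have := lexx `|v 0 k|; rewrite ler_norml => /andP[h1 h2].
  apply/andP; split; nra.
have anc_ne_i : forall s k, 0 < F s k -> (forall l, l != k -> F s l = 0) -> s != i.
  move=> s k hs hl; apply/eqP => si; subst s.
  have [j hj] := @other_ord _ k hK.
  have := hl j hj; have := hi j; move=> /andP[h1 _]; lra.
exists F2; split; [split|split].
- move=> s k; rewrite F2E; have := hF s k; case: (eqVneq s i) => [->|ne] /=.
    have := hi k; have := ev k; rewrite mul1r; lra.
  rewrite mul0r mulr0 addr0 //.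
- move=> k; have [s [hs hl]] := hanc k; exists s.
  have ne := anc_ne_i s k hs hl.
  rewrite F2E (negbTE ne) mul0r mulr0 addr0; split => // l hlk.
  by rewrite F2E (negbTE ne) mul0r mulr0 addr0 hl.
- by rewrite /F2 mulmxDl -scalemxAl -mulmxA vQ mulmx0 scaler0 addr0.
- case=> pi [hpi _].
  have pid : forall k, pi k = k.
    move=> k; have [s [hs hl]] := hanc k; have ne := anc_ne_i s k hs hl.
    have := hpi s k; rewrite F2E (negbTE ne) mul0r mulr0 addr0 => h.
    case: (eqVneq (pi k) k) => // hn; move: hs; rewrite h (hl _ hn) ltxx //.
  move/eqP: v0; apply; apply/rowP => k; rewrite mxE.
  have := hpi i k; rewrite pid F2E eqxx mul1r => h.
  have : e * v 0 k = 0 by lra.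
  by move/eqP; rewrite mulf_eq0 gt_eqF //= => /eqP.
Qed.

Lemma anchoredE (R : realType) M K (F : 'M[R]_(M, K)) k :
  anchored F k <-> exists r c, 0 < c /\ forall l, F r l = c * (l == k)%:R.
Proof.
split => [[r [c [hc h]]]|[r [c [hc h]]]]; exists r, c; split => //.
  by move=> l; move/rowP: h => /(_ l); rewrite !mxE eqxx.
by apply/rowP => l; rewrite !mxE h eqxx.
Qed.

Lemma colsumE (R : realType) K N (X : 'M[R]_(K, N)) i :
  ((const_mx 1 : 'rV[R]_K) *m X) 0 i = \sum_k X k i.
Proof. by rewrite mxE; apply: eq_bigr => k _; rewrite mxE mul1r. Qed.

Lemma part2 (R : realType) (M N : nat) K : (2 <= K)%N ->
   forall (F : 'M[R]_(M, K)) (Q : 'M[R]_(K, N)),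
     inFK F -> inQKin Q ->
     forall (delta : R) (k0 : 'I_K), 0 < delta -> delta < 1 / 2 ->
     (forall i : 'I_N, delta <= Q k0 i) ->
     exists (F2 : 'M[R]_(M, K)) (Q2 : 'M[R]_(K, N)),
       inFK F2 /\ ~ inFKan F2 /\ inQKin Q2 /\
       F *m Q = F2 *m Q2 /\ ~ equivFQ F Q F2 Q2 /\
       (forall k : 'I_K, anchored F2 k <-> (anchored F k /\ k != k0)).
Proof.
move=> hK F Q hF [[hQ01 hQs] hfree] s k0 hs hs2 hk0.
set a := 1 - s.
have ha : 0 < a by rewrite /a; lra.
have ha0 : a != 0 by rewrite gt_eqF.
set u : 'cV[R]_K := delta_mx k0 0.
set o : 'rV[R]_K := const_mx 1.
set E := u *m o.
have Eent : forall k l, E k l = (k == k0)%:R.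
  by move=> k l; rewrite !mxE big_ord1 !mxE eqxx andbT mulr1.
have ou : o *m u = 1%:M.
  by rewrite /u -colE; apply/matrixP => x y; rewrite !ord1 !mxE.
have EE : E *m E = E by rewrite /E mulmxA -(mulmxA u) ou mulmx1.
have oQ : o *m Q = const_mx 1.
  by apply/matrixP => x y; rewrite ord1 colsumE hQs mxE.
set B := a%:M + s *: E.
set C := a^-1 *: (1%:M - s *: E).
have BC : B *m C = 1%:M.
  rewrite /B /C -scalemxAr mulmxDl mul_scalar_mx -scalemxAl !mulmxBr !mulmx1.
  rewrite -scalemxAr EE; apply/matrixP => x y; rewrite !mxE. 
  move: ((x == y)%:R : R) (\sum_j u x j * o j y) => p q; rewrite /a.
  field; rewrite -/a //.
have CB : C *m B = 1%:M by apply: mulmx1C.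
have oC : o *m C = o.
  rewrite /C -scalemxAr mulmxBr mulmx1 -scalemxAr /E mulmxA ou mul1mx.
  apply/matrixP => x y; rewrite !mxE /a; field; rewrite -/a //.
set F2 := F *m B.
set Q2 := C *m Q.
have F2E : forall r l, F2 r l = a * F r l + s * F r k0.
  move=> r l; rewrite /F2 /B mulmxDr mul_mx_scalar -scalemxAr /E mulmxA -colE.
  by rewrite !mxE big_ord1 !mxE mulr1.
have Q2E : forall k i, Q2 k i = a^-1 * (Q k i - s * (k == k0)%:R).
  move=> k i; rewrite /Q2 /C -scalemxAl mulmxBl mul1mx -scalemxAl /E -mulmxA oQ.
  by rewrite !mxE big_ord1 !mxE eqxx andbT mulr1.
have Q2s : forall i, \sum_k Q2 k i = 1.
  by move=> i; rewrite -colsumE /Q2 mulmxA oC oQ mxE.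
have Q2ge0 : forall k i, 0 <= Q2 k i.
  move=> k i; rewrite Q2E; apply: mulr_ge0; first by rewrite invr_ge0 ltW.
  rewrite subr_ge0; case: (eqVneq k k0) => [->|_]; last by rewrite mulr0; case/andP: (hQ01 k i).
  by rewrite mulr1.
have [j hj] := @other_ord _ k0 hK.
have F2k0 : forall r, F2 r k0 = F r k0 by move=> r; rewrite F2E /a; ring.
exists F2, Q2; split; [|split; [|split; [|split; [|split]]]].
- move=> r l; rewrite F2E; have := hF r l; have := hF r k0.
  move=> /andP[h1 h2] /andP[h3 h4]; apply/andP; split; rewrite /a; nra.
- case=> _ h; have [r [hr hl]] := h k0.
  have := hl j hj; rewrite F2E; rewrite F2k0 in hr.
  have := hF r j; move=> /andP[h1 _]; rewrite /a; nra.
- split; first split.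
  + move=> k i; rewrite Q2ge0 /=; apply: (@le1_of_sum _ _ (fun k => Q2 k i)) => //.
  + exact: Q2s.
  + apply/row_freeP; case/row_freeP: hfree => X hX; exists (X *m B).
    by rewrite /Q2 -mulmxA (mulmxA Q) hX mul1mx CB.
- by rewrite /F2 /Q2 mulmxA -(mulmxA F) BC mulmx1.
- case=> pi [_ hpi].
  set w : 'rV[R]_K := a^-1 *: (delta_mx 0 k0 - s *: o) - delta_mx 0 (pi k0).
  have wQ : w *m Q = 0.
    rewrite /w mulmxBl -scalemxAl mulmxBl -scalemxAl oQ -!rowE.
    apply/rowP => i; rewrite !mxE -hpi Q2E eqxx; by rewrite subrr.
  have w0 : w = 0 by apply: (row_free_inj hfree); rewrite wQ mul0mx.
  case: (eqVneq (pi k0) k0) => hp.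
    move/rowP: w0 => /(_ j); rewrite !mxE hp (negbTE hj) /=.
    move/eqP; rewrite subr0 mulf_eq0 invr_eq0 (negbTE ha0) /=.
    by rewrite mulr1 sub0r oppr_eq0 gt_eqF.
  move/rowP: w0 => /(_ k0); rewrite !mxE eqxx eq_sym (negbTE hp) /= mulr1 subr0.
  by rewrite eqxx -/a mulVf // => /eqP; rewrite oner_eq0.
- move=> k; rewrite !anchoredE; case: (eqVneq k k0) => [->|hk].
    split => [[r [c [hc hl]]]|]; last by case.
    have h1 := hl k0; rewrite F2k0 eqxx mulr1 in h1.
    have := hl j; rewrite F2E (negbTE hj) mulr0 h1.
    have := hF r j; move=> /andP[h2 _]; rewrite /a; nra.
  split => [[r [c [hc hl]]]|[[r [c [hc hl]]] _]]; last first.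
    exists r, (a * c); split; first exact: mulr_gt0.
    move=> l; rewrite F2E hl (hl k0) [k0 == k]eq_sym (negbTE hk)/= !mulr0 addr0 mulrA //.
  have Fk0 : F r k0 = 0 by have := hl k0; rewrite F2k0 => ->; rewrite [k0 == k]eq_sym (negbTE hk) mulr0.
  split => //; exists r, (c / a); split; first exact: divr_gt0.
  move=> l; have := hl l; rewrite F2E Fk0 mulr0 addr0 => h.
  by apply: (mulfI ha0); rewrite h; field.
Qed.

Theorem mainTheorem4 (R : realType) (M N : nat) (hM : (0 < M)%N) (hN : (0 < N)%N) :
  (* (1) *)
  (forall (K : nat), (2 <= K)%N -> (K.+1 <= M)%N ->
   forall (F : 'M[R]_(M, K)) (Q : 'M[R]_(K, N)),
     inFKan F ->
     (exists delta : R, 0 < delta /\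
        exists i : 'I_M, forall k : 'I_K, delta <= F i k <= 1 - delta) ->
     inQK Q -> ~ inQKin Q ->
     exists F2 : 'M[R]_(M, K),
       inFKan F2 /\ F *m Q = F2 *m Q /\ ~ equivFQ F Q F2 Q)
  /\
  (* (2) *)
  (forall (K : nat), (2 <= K)%N ->
   forall (F : 'M[R]_(M, K)) (Q : 'M[R]_(K, N)),
     inFK F -> inQKin Q ->
     forall (delta : R) (k0 : 'I_K), 0 < delta -> delta < 1 / 2 ->
     (forall i : 'I_N, delta <= Q k0 i) ->
     exists (F2 : 'M[R]_(M, K)) (Q2 : 'M[R]_(K, N)),
       inFK F2 /\ ~ inFKan F2 /\ inQKin Q2 /\
       F *m Q = F2 *m Q2 /\ ~ equivFQ F Q F2 Q2 /\
       (forall k : 'I_K, anchored F2 k <-> (anchored F k /\ k != k0))).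
Proof.
split.
- move=> K hK _; exact: part1 hK.
- move=> K hK; exact: part2 hK.
Qed.
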